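(* For all integers $d,n\geq 1$, the tangential variety $\tau_{d,n}\subset\mathbb{P}\mathrm{Sym}^d\mathbb{C}^{n+1}$ to the degree-$d$ Veronese embedding of $\mathbb{P}^n$ is strongly concise with respect to the monomial coordinates. Explicitly: for every multi-index $\alpha\in\mathbb{Z}_{\ge0}^{n+1}$ with $|\alpha|=d$ there exist linear forms $L,M$ in $x_0,\dots,x_n$ such that in $L^{d-1}M$ the coefficient of $\mathbf{x}^\alpha$ is zero and the coefficients of all other monomials of degree $d$ are nonzero.
   Context: $\mathbb{P}\mathrm{Sym}^d\mathbb{C}^{n+1}$ is identified with the projective space of degree-$d$ homogeneous polynomials in $x_0,\dots,x_n$, with projective coordinates given by the coefficients of the monomials $\mathbf{x}^\alpha=x_0^{\alpha_0}\cdots x_n^{\alpha_n}$, $|\alpha|=d$. The tangential variety is $\tau_{d,n}=\overline{\{[L^{d-1}M]: L,M \text{ linear forms}\}}$. A variety $X$ in a projective space with coordinate hyperplanes $H_i$ is strongly concise if for every $i$, $(X\cap H_i)\not\subset\bigcup_{j\ne i}H_j$. *)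

(* Defs.v *)
From HB Require Import structures.
From mathcomp Require Import all_boot all_order all_algebra.
From mathcomp Require Import complex.
From mathcomp Require Import mpoly.
From mathcomp Require reals.
Import reals.Real.Exports.
Set Implicit Arguments. Unset Strict Implicit. Unset Printing Implicit Defensive.
Import Order.TTheory GRing.Theory Num.Theory.
Local Open Scope ring_scope.

Definition linform (K : nzRingType) (n : nat) (a : 'I_n.+1 -> K) : {mpoly K[n.+1]} :=
  \sum_(i < n.+1) a i *: 'X_i.

(* Main.v *)
Require Import Defs.
From HB Require Import structures.
From mathcomp Require Import all_boot all_order all_algebra.
From mathcomp Require Import complex.
From mathcomp Require Import mpoly.
From mathcomp Require reals.
From mathcomp Require Import ring.
Import reals.Real.Exports.
Import Order.TTheory GRing.Theory Num.Theory.
Local Open Scope ring_scope.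

Section H.
Variable C : comRingType.
Variable n : nat.
Implicit Types p : {mpoly C[n]}.

Lemma mderivXn_aux p i k : (p ^+ k.+1)^`M(i) = (p^`M(i) * p ^+ k) *+ k.+1.
Proof.
elim: k => [|k IH]; first by rewrite expr1 expr0 mulr1.
rewrite exprS mderivM IH !exprS; ring.
Qed.

Lemma mcoeffMXU p (j : 'I_n) b :
  (p * 'X_j)@_b = if (0 < b j)%N then p@_(b - U_(j)) else 0.
Proof.
case: ifP => hb.
  have -> : b = (U_(j) + (b - U_(j)))%MM.
    by rewrite addmC submK // lep1mP -lt0n.
  by rewrite mcoeffMX addmC addmK.
apply/eqP; rewrite mcoeff_eq0 (perm_mem (msuppMX _ _)).
apply/negP => /mapP [m _ hm].
by move: hb; rewrite hm mnmDE mnm1E eqxx.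
Qed.

End H.
Section H2.
Variable C : comRingType.
Variable n : nat.
Lemma mderivL (j : 'I_n.+1) :
  (linform (fun _ : 'I_n.+1 => (1 : C)))^`M(j) = 1.
Proof.
rewrite /linform raddf_sum (bigD1 j) //= big1 => [|k hk].
  rewrite addr0 mderivZ mderivX mnm1E eqxx scale1r.
  have -> : (U_(j) - U_(j))%MM = 0%MM by apply/mnmP => i; rewrite mnmBE subnn mnm0E.
  by rewrite mpolyX0 scale1r.
by rewrite mderivZ mderivX mnm1E (negbTE hk) scale0r scaler0.
Qed.

Lemma keyid d (b : 'X_{1..n.+1}) (j : 'I_n.+1) :
  let L := linform (fun _ : 'I_n.+1 => (1 : C)) in
  (d.+1)%:R * ((L ^+ d) * 'X_j)@_b = (b j)%:R * (L ^+ d.+1)@_b.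
Proof.
move=> L; rewrite mcoeffMXU; case: ifP => hb; last first.
  by move: hb; rewrite lt0n => /negbFE/eqP ->; rewrite mulr0 mul0r.
have := mcoeff_deriv j (b - U_(j))%MM (L ^+ d.+1).
rewrite mderivXn_aux mderivL mul1r mcoeffMn submK; last by rewrite lep1mP -lt0n.
rewrite mnmBE mnm1E eqxx subn1 prednK // => h.
by rewrite mulr_natl h mulr_natl.
Qed.
End H2.

Section P.
Variable C : numDomainType.
Variable n : nat.
Lemma Lpos k (b : 'X_{1..n.+1}) :
  let L := linform (fun _ : 'I_n.+1 => (1 : C)) in
  0 <= (L ^+ k)@_b /\ (mdeg b = k -> 0 < (L ^+ k)@_b).
Proof.
move=> L; elim: k b => [|k IH] b.
  rewrite expr0 mcoeff1; split; first exact: ler0n.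
  by move/eqP; rewrite mdeg_eq0 => /eqP ->; rewrite eqxx ltr01.
have E : (L ^+ k.+1)@_b = \sum_(j < n.+1) if (0 < b j)%N then (L ^+ k)@_(b - U_(j)) else 0.
  rewrite exprSr /L {2}/linform mulr_sumr raddf_sum; apply: eq_bigr => j _.
  by rewrite scale1r; apply: mcoeffMXU.
rewrite E; split.
  by apply: sumr_ge0 => j _; case: ifP => _ //; exact: (IH _).1.
move=> hb; case: (pickP (fun j => 0 < b j)%N) => [j hj | h]; last first.
  exfalso; move: hb; rewrite mdegE big1 // => j _.
  by move: (h j) => /= /negbT; rewrite lt0n negbK => /eqP.
rewrite (bigD1 j) //= hj.
have hd : mdeg (b - U_(j))%MM = k.
  move: hb; rewrite -{1}(submK (m := U_(j)) (m' := b)); last by rewrite lep1mP -lt0n.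
  by rewrite mdegD mdeg1 addn1 => -[].
apply: (lt_le_trans ((IH _).2 hd)); rewrite lerDl.
by apply: sumr_ge0 => i _; case: ifP => _ //; exact: (IH _).1.
Qed.
End P.

Lemma digits (K m : nat) (f g : 'I_m -> nat) :
  (forall i, f i < K)%N -> (forall i, g i < K)%N ->
  (\sum_(i < m) f i * K ^ i = \sum_(i < m) g i * K ^ i)%N -> forall i, f i = g i.
Proof.
elim: m f g => [|m IH] f g hf hg; first by move=> _ [].
rewrite !big_ord_recl /= !expn0 !muln1.
have e : forall h : 'I_m.+1 -> nat,
  (\sum_(i < m) h (lift ord0 i) * K ^ (bump 0 i) = K * \sum_(i < m) h (lift ord0 i) * K ^ i)%N.
  by move=> h; rewrite big_distrr; apply: eq_bigr => i _; rewrite /bump /= expnS mulnCA.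
rewrite !e => H.
have h0 : f ord0 = g ord0.
  have := congr1 (fun x => x %% K)%N H.
  by rewrite /= ![(_ + K * _)%N]addnC ![(K * _)%N]mulnC !modnMDl !modn_small.
have hK : (0 < K)%N by apply: leq_ltn_trans (hf ord0).
move: H; rewrite h0 => /addnI /eqP; rewrite eqn_pmul2l // => /eqP H.
have IH' := IH _ _ (fun i => hf _) (fun i => hg _) H.
move=> [[|i] hi]; first by rewrite (_ : Ordinal hi = ord0) //; apply: val_inj.
by have := IH' (Ordinal (hi : (i < m)%N)); rewrite (_ : lift ord0 _ = Ordinal hi) //; apply: val_inj.
Qed.

Lemma mdeg_le (n : nat) (b : 'X_{1..n}) i : (b i <= mdeg b)%N.
Proof. by rewrite mdegE (bigD1 i) //= leq_addr. Qed.

Theorem mainTheorem8 (R : realType) (d n : nat) (hd : (1 <= d)%N) (hn : (1 <= n)%N)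
  (alpha : 'X_{1..n.+1}) (halpha : mdeg alpha = d) :
  exists (a b : 'I_n.+1 -> R[i]),
    let F := linform a ^+ d.-1 * linform b in
    F@_alpha = 0 /\
    (forall beta : 'X_{1..n.+1}, mdeg beta = d -> beta != alpha -> F@_beta != 0).
Proof.
pose K := d.+1.
pose v (m : 'X_{1..n.+1}) := (\sum_(i < n.+1) m i * K ^ i)%N.
pose va : R[i] := (v alpha)%:R.
pose b := fun j : 'I_n.+1 => (d * K ^ j)%:R - va.
exists (fun _ => 1), b => F.
pose L := linform (fun _ : 'I_n.+1 => (1 : R[i])).
have claim : forall beta : 'X_{1..n.+1}, mdeg beta = d ->
    d%:R * F@_beta = (L ^+ d)@_beta * (d%:R * ((v beta)%:R - va)).
  move=> beta hb.
  have S : \sum_(j < n.+1) b j * (beta j)%:R = d%:R * ((v beta)%:R - va).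
    rewrite mulrBr -{2}hb mdegE /v !natr_sum mulr_sumr [_ * va]mulrC mulr_sumr -sumrB.
    by apply: eq_bigr => j _; rewrite /b !natrM natrX; ring.
  have kd : forall j, d%:R * ((L ^+ d.-1) * 'X_j)@_beta = (beta j)%:R * (L ^+ d)@_beta.
    by move=> j; case: d hd {hb S b F K v va halpha} => [//|d'] _ /=; apply: keyid.
  rewrite -S mulr_sumr /F.
  rewrite [linform b]/linform mulr_sumr raddf_sum mulr_sumr; apply: eq_bigr => j _.
  rewrite -scalerAr -[X in d%:R * X]/((b j *: (L ^+ d.-1 * 'X_j))@_beta) mcoeffZ mulrCA kd; ring.
have dn0 : (d%:R : R[i]) != 0 by rewrite pnatr_eq0 -lt0n.
split.
  have := claim _ halpha; rewrite subrr mulr0 mulr0 => /eqP.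
  by rewrite mulf_eq0 (negbTE dn0) /= => /eqP.
move=> beta hb hne; apply/negP => /eqP h0.
have := claim _ hb; rewrite h0 mulr0 => /esym/eqP.
rewrite !mulf_eq0 (negbTE dn0) /= subr_eq0 eqr_nat.
have [_ /(_ hb) Qp] := Lpos (R[i]) n d beta.
have Qn : (L ^+ d)@_beta != 0 by rewrite gt_eqF.
rewrite (negbTE Qn) /= => /eqP hv.
move/negP: hne; apply; apply/eqP/mnmP.
apply: (@digits K n.+1 (fun i => beta i) (fun i => alpha i)) => //.
- by move=> i; rewrite ltnS -hb; exact: mdeg_le.
- by move=> i; rewrite ltnS -halpha; exact: mdeg_le.
Qed.
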